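(* For every integer $m\geq 0$, $S_m\subseteq\Lambda_m$.
   Context: $\mathbb{N}=\{1,2,3,\dots\}$, $\mathbb{N}_0=\mathbb{N}\cup\{0\}$. The Collatz map $T:\mathbb{N}\to\mathbb{N}$ is $T(n)=\frac{3n+1}{2}$ if $n$ is odd and $T(n)=\frac{n}{2}$ if $n$ is even; $T^{(k)}$ denotes the $k$-fold composition. The total stopping time is $\sigma_\infty(1)=0$ and, for $n\geq 2$, $\sigma_\infty(n)=\inf\{k\in\mathbb{N}\cup\{\infty\} : T^{(k)}(n)=1\}$. Let $S_0=\{1\}$ and $S_k=\{n\in\mathbb{N}:\sigma_\infty(n)=k\}$ for $k\geq 1$. For $0\leq m\leq 3$ let $\Lambda_m=\{2^m\}$, and for $m\geq 4$ let $\Lambda_m$ be the set of all $n\in\mathbb{N}$ that can be written as $n=\frac{2^m}{3^l}-\sum_{k=1}^{l}\frac{2^{b_k}}{3^k}$ for some integers $l,b_1,\dots,b_l\in\mathbb{N}_0$ with $0\leq l\leq m-3$ and $0\leq b_1<b_2<\cdots<b_l\leq m-4$. *)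

(* Defs.v *)
From mathcomp Require Import all_boot all_order all_algebra.
Set Implicit Arguments. Unset Strict Implicit. Unset Printing Implicit Defensive.
Import Order.TTheory GRing.Theory Num.Theory.

Definition collatzT (n : nat) : nat := if odd n then (3 * n + 1)./2 else n./2.

Definition collatzTk (k n : nat) : nat := iter k collatzT n.

(* S_k = { n in N : sigma_inf(n) = k }, with sigma_inf(1) = 0 and for n >= 2,
   sigma_inf(n) = least k >= 1 with T^(k)(n) = 1 (infinity if none). *)
Definition inS (k n : nat) : Prop :=
  if k == 0 then n = 1
  else [/\ 2 <= n, collatzTk k n = 1 & forall j, 1 <= j < k -> collatzTk j n <> 1].

(* Lambda_m as in the paper; b is the sequence b_1 < ... < b_l (b_k = nth 0 b (k-1)). *)
Definition inLambda (m n : nat) : Prop :=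
  if m <= 3 then n = 2 ^ m
  else exists (l : nat) (b : seq nat),
    [/\ l <= m - 3, size b = l, sorted ltn b, all (fun x => x <= m - 4) b &
        ((n%:R : rat) = (2 ^ m)%N%:R / (3 ^ l)%N%:R
                - \sum_(k < l) (2 ^ nth 0 b k)%N%:R / (3 ^ k.+1)%N%:R)%R].

(* Main.v *)
Require Import Defs.
From mathcomp Require Import all_boot all_order all_algebra.
From mathcomp Require Import zify.

Lemma Tdef y : collatzT y = if odd y then (3 * y + 1) %/ 2 else y %/ 2.
Proof. by rewrite /collatzT !divn2. Qed.

Lemma oddE y : odd y = (y %% 2 == 1).
Proof. by rewrite modn2; case: (odd y). Qed.

Lemma pre1 y : collatzT y = 1 -> y = 2.
Proof. rewrite Tdef oddE; case: eqP => /= H; lia. Qed.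

Lemma pre2 y : collatzT y = 2 -> y = 4 \/ y = 1.
Proof. rewrite Tdef oddE; case: eqP => /= H; lia. Qed.

Lemma pre4 y : collatzT y = 4 -> y = 8.
Proof. rewrite Tdef oddE; case: eqP => /= H; lia. Qed.

Lemma TkS k n : collatzTk k.+1 n = collatzT (collatzTk k n).
Proof. by rewrite /collatzTk iterS. Qed.

Definition G (b : seq nat) : nat := foldl (fun acc x => 3 * acc + 2 ^ x) 0 b.
Definition bs (k n : nat) := [seq j <- iota 0 k | odd (collatzTk j n)].

Lemma key k n : 3 ^ size (bs k n) * n + G (bs k n) = 2 ^ k * collatzTk k n.
Proof.
elim: k => [|k IH]; first by rewrite /bs /G /= !mul1n addn0.
rewrite /bs (_ : iota 0 k.+1 = iota 0 k ++ [:: k]); last by rewrite -addn1 iotaD.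
rewrite filter_cat /= Tdef.
case Ho: (odd (collatzTk k n)); rewrite /= ?cats1 ?cats0 -/(bs k n).
- rewrite size_rcons /G foldl_rcons -/(G (bs k n)) expnS addn1 expnS.
  move: IH Ho; set x := collatzTk k n; set a := 3 ^ _; set g := G _.
  rewrite oddE; move=> IH /eqP Ho.
  have E : (3 * x).+1 = 2 * ((3 * x).+1 %/ 2) by lia.
  rewrite [RHS]mulnAC -E -mulnA; move: IH; generalize (2 ^ k) (a * n) => P A IH.
  lia.
- rewrite expnS.
  move: IH Ho; set x := collatzTk k n; rewrite oddE => IH /eqP Ho.
  have E : x = 2 * (x %/ 2) by lia.
  by rewrite [RHS]mulnAC -E [RHS]mulnC.
Qed.

Import Order.TTheory GRing.Theory Num.Theory.

Lemma chain1 k n : inS k.+1 n -> collatzTk k n = 2.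
Proof. by case=> _ H1 _; apply: pre1; rewrite -TkS. Qed.

Lemma chain2 k n : inS k.+2 n -> collatzTk k n = 4.
Proof.
move=> H; have := chain1 _ _ H; rewrite TkS => /pre2 [//|E].
case: H => H2 _ H3; case: k E H3 => [|k] E H3; first by rewrite /= in E; rewrite E in H2.
by exfalso; apply: (H3 k.+1) E; lia.
Qed.

Lemma chain3 k n : inS k.+3 n -> collatzTk k n = 8.
Proof. by move=> H; have := chain2 _ _ H; rewrite TkS => /pre4. Qed.

Local Open Scope ring_scope.

Lemma Grat (b : seq nat) : ((G b)%:R / (3 ^ size b)%N%:R : rat) =
  \sum_(k < size b) (2 ^ nth 0 b k)%N%:R / (3 ^ k.+1)%N%:R.
Proof.
elim/last_ind: b => [|b x IH]; first by rewrite big_ord0 /G /= mul0r.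
rewrite size_rcons big_ord_recr /= /G foldl_rcons -/(G b) nth_rcons ltnn eqxx.
under eq_bigr => i _ do rewrite nth_rcons ltn_ord.
rewrite -IH natrD mulrDl expnS !natrM; congr (_ + _).
have H3 : (3%:R : rat) != 0 by rewrite pnatr_eq0.
have Hp : ((3 ^ size b)%N%:R : rat) != 0 by rewrite pnatr_eq0 expn_eq0.
by rewrite invfM mulrACA divff // mul1r.
Qed.

Theorem mainTheorem3 : forall (m n : nat), inS m n -> inLambda m n.
Proof.
move=> m n H; rewrite /inLambda.
case: m H => [|[|[|[|k]]]] H /=.
- by move: H; rewrite /inS.
- by have := chain1 _ _ H.
- by have := chain2 _ _ H.
- by have := chain3 _ _ H.
have E := key k.+1 n; rewrite (chain3 _ _ H) in E.
exists (size (bs k.+1 n)), (bs k.+1 n); split => //.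
- by rewrite /bs size_filter; apply: leq_trans (count_size _ _) _; rewrite size_iota.
- apply: sorted_filter; [exact: ltn_trans | exact: iota_ltn_sorted].
- apply/allP => x; rewrite /bs mem_filter mem_iota => /andP [_ /andP [_ Hx]].
  lia.
rewrite -Grat.
have Hp : ((3 ^ size (bs k.+1 n))%N%:R : rat) != 0 by rewrite pnatr_eq0 expn_eq0.
apply: (mulIf Hp); rewrite mulrBl !divfK // -natrM mulnC.
have -> : (2 ^ k.+4 = 3 ^ size (bs k.+1 n) * n + G (bs k.+1 n))%N.
  by rewrite E !expnS; lia.
by rewrite natrD addrK.
Qed.
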